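(* Let $\mu, \nu$ be compactly supported probability measures on $\mathbb{R}$, and suppose there is a function $H_{\mu,\nu} \in L^2(\mu)$ such that $(\mu\otimes\nu)[\partial f] = \int H_{\mu,\nu} f\, d\mu$ for every polynomial $f$. Then for all polynomials $f, g$, \[ \int \bigl(L_\nu[L_\mu[f]] - H_{\mu,\nu} L_\mu[f]\bigr)\, g \, d\mu = -\int L_\mu[f]\, L_\mu[g]\, d\nu , \] so in particular the operator $L_\nu L_\mu - H_{\mu,\nu} L_\mu$ is symmetric with respect to the inner product of $L^2(\mu)$ on polynomials.
   Context: For a polynomial $f$, $(\partial f)(x,y) = \frac{f(x)-f(y)}{x-y}$ (a polynomial in two variables), $(\mu\otimes\nu)[F] = \iint F(x,y)\,d\mu(x)\,d\nu(y)$, and $L_\mu[f](x) = \int \frac{f(x)-f(y)}{x-y}\,d\mu(y)$. The function $H_{\mu,\nu}$ is called the c-free conjugate variable of the pair $(\mu,\nu)$. *)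

(* Defs.v *)
From HB Require Import structures.
From mathcomp Require Import all_boot all_order all_algebra.
From mathcomp Require Import all_classical all_reals all_analysis.
Set Implicit Arguments. Unset Strict Implicit. Unset Printing Implicit Defensive.
Import Order.TTheory GRing.Theory Num.Theory.
Local Open Scope classical_set_scope.
Local Open Scope ring_scope.

(* For g a polynomial
   function this is exactly the two-variable polynomial (∂g)(x,y). *)
Definition dq {R : realType} (g : R -> R) (x y : R) : R :=
  if x == y then derive1 g x else (g x - g y) / (x - y).

Definition Lop {R : realType} (mu : probability R R) (g : R -> R) (x : R) : R :=
  Rintegral mu setT (fun y => dq g x y).

Definition compactly_supported {R : realType} (mu : probability R R) : Prop :=
  exists M : R, mu [set x | M < `|x|] = 0%E.

Definition L2fun {R : realType} (mu : probability R R) (H : R -> R) : Prop :=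
  measurable_fun setT H /\ (\int[mu]_x ((H x) ^+ 2)%:E < +oo)%E.

(* Main.v *)
Require Import Defs.
From mathcomp Require Import all_boot all_order all_algebra.
From mathcomp Require Import all_classical all_reals all_analysis.
From mathcomp Require Import ring lra measurable_realfun.
Import Order.TTheory GRing.Theory Num.Theory numFieldNormedType.Exports.
Local Open Scope classical_set_scope.
Local Open Scope ring_scope.

Lemma cs_int (R : realType) (mu : probability R R) (f : R -> R) :
  compactly_supported mu -> continuous f -> mu.-integrable setT (EFin \o f).
Proof.
move=> [M hM] cf.
have mf : measurable_fun setT f := measurable_realfun.continuous_measurable_fun cf.
have mN : measurable [set x : R | M < `|x|].
  have := measurable_realfun.normr_measurable measurableT (@measurable_itv _ `]M, +oo[).
  rewrite setTI; congr measurable; apply/seteqP; split => x /=;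
    by rewrite in_itv /= andbT.
rewrite (negligible_integrable mN measurableT _ hM); last exact/measurable_EFinP.
have -> : setT `\` [set x : R | M < `|x|] = `[-M, M]%classic.
  apply/seteqP; split => x /=; rewrite in_itv /= -ler_norml.
    by move=> [_ /negP]; rewrite -leNgt.
  by move=> h; split => //; apply/negP; rewrite -leNgt.
apply: measurable_bounded_integrable => //.
- by rewrite (le_lt_trans (probability_le1 _ _)) ?ltry.
- exact: measurable_funS mf.
- have /compact_bounded[B [_ mrt]] := continuous_compact (continuous_subspaceT cf) (@segment_compact R (-M) M).
  by exists B; split; rewrite ?num_real // => ? ? ? ?; exact: mrt.
Qed.

Lemma poly_int (R : realType) (mu : probability R R) (p : {poly R}) :
  compactly_supported mu -> mu.-integrable setT (EFin \o horner p).
Proof. by move=> cs; apply: cs_int => //; exact: continuous_horner. Qed.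

Lemma H_int (R : realType) (mu : probability R R) (H : R -> R) (p : {poly R}) :
  compactly_supported mu -> L2fun mu H ->
  mu.-integrable setT (EFin \o (fun x => H x * p.[x])).
Proof.
move=> cs [mH H2].
have mp : measurable_fun setT (horner p) :=
  continuous_measurable_fun (@continuous_horner R p).
have iH2 : mu.-integrable setT (EFin \o (fun x => H x ^+ 2)).
  apply/integrableP; split; first exact/measurable_EFinP/measurable_funX.
  rewrite (eq_integral (fun x => (H x ^+ 2)%:E)) //.
  by move=> x _ /=; rewrite ger0_norm ?sqr_ge0.
have ip2 : mu.-integrable setT (EFin \o (fun x => p.[x] ^+ 2)).
  have -> : (fun x => p.[x] ^+ 2) = horner (p ^+ 2).
    by apply/funext => x; rewrite horner_exp.
  exact: poly_int.
have iS : mu.-integrable setT (EFin \o (fun x => H x ^+ 2 + p.[x] ^+ 2)).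
  apply: (eq_integrable measurableT _ _ _ (integrableD measurableT iH2 ip2)) => x _ /=.
  by rewrite EFinD.
apply: (le_integrable measurableT _ _ iS).
  by apply/measurable_EFinP; exact: measurable_funM.
move=> x _ /=; rewrite lee_fin (ger0_norm (addr_ge0 (sqr_ge0 _) (sqr_ge0 _))).
rewrite normrM -(real_normK (num_real (H x))) -(real_normK (num_real p.[x])).
have := normr_ge0 (H x); have := normr_ge0 p.[x].
have := sqr_ge0 (`|H x| - `|p.[x]|).
set a := `|H x|; set b := `|p.[x]|.
move=> *; nra.
Qed.

Definition Dp {R : realType} (p : {poly R}) (x y : R) : R :=
  \sum_(i < size p) p`_i * \sum_(j < i) (x ^+ (i.-1 - j) * y ^+ j).

Lemma dqE (R : realType) (p : {poly R}) x y : dq (horner p) x y = Dp p x y.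
Proof.
rewrite /dq /Dp; case: eqP => [<-|/eqP xy].
- rewrite -derivE /deriv horner_poly.
  have E i : \sum_(j < i) x ^+ (i.-1 - j) * x ^+ j = x ^+ i.-1 *+ i.
    rewrite (eq_bigr (fun _ => x ^+ i.-1)) ?sumr_const ?card_ord // => j _.
    rewrite -exprD subnK //; case: i j => [[]//|i] j /=.
    exact: (ltn_ord j).
  under [RHS]eq_bigr do rewrite E.
  case: (size p) => [|n]; first by rewrite !big_ord0.
  rewrite big_ord_recl /= mulr0n mulr0 add0r; apply: eq_bigr => i _.
  by rewrite /= mulrnAl mulrnAr.
- rewrite !horner_coef -sumrB mulr_suml; apply: eq_bigr => i _.
  by rewrite -mulrBr subrXX [(x - y) * _]mulrC mulrA mulfK // subr_eq0.
Qed.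

Lemma dq_sym (R : realType) (g : R -> R) x y : dq g x y = dq g y x.
Proof.
rewrite /dq eq_sym; case: eqP => [->//|/eqP xy].
have h1 : x - y != 0 by rewrite subr_eq0 eq_sym.
have h2 : y - x != 0 by rewrite subr_eq0.
by rewrite -[y - x]opprB -[g y - g x]opprB invrN mulrNN.
Qed.

Lemma dqM (R : realType) (p q : {poly R}) x y :
  dq (horner (p * q)) x y = dq (horner p) x y * q.[x] + p.[y] * dq (horner q) x y.
Proof.
rewrite /dq; case: eqP => [<-|/eqP xy].
  by rewrite -!derivE derivM hornerD !hornerM mulrC.
have xy' : x - y != 0 by rewrite subr_eq0.
rewrite !hornerM; field => //.
Qed.

Definition Em {R : realType} (mu : probability R R) (q : {poly R}) : R :=
  Rintegral mu setT (horner q).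

Lemma EmD (R : realType) (mu : probability R R) p q : compactly_supported mu ->
  Em mu (p + q) = Em mu p + Em mu q.
Proof.
move=> cs; rewrite /Em.
have -> : horner (p + q) = (fun x => p.[x] + q.[x]) by apply/funext => x; rewrite hornerD.
by rewrite RintegralD //; exact: poly_int.
Qed.

Lemma EmZ (R : realType) (mu : probability R R) a p : compactly_supported mu ->
  Em mu (a *: p) = a * Em mu p.
Proof.
move=> cs; rewrite /Em.
have -> : horner (a *: p) = (fun x => a * p.[x]) by apply/funext => x; rewrite hornerZ.
by rewrite RintegralZl //; exact: poly_int.
Qed.

Lemma Em_sumZ (R : realType) (mu : probability R R) (I : Type) (r : seq I)
  (P : pred I) (a : I -> R) (q : I -> {poly R}) : compactly_supported mu ->
  Em mu (\sum_(i <- r | P i) a i *: q i) = \sum_(i <- r | P i) a i * Em mu (q i).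
Proof.
move=> cs.
rewrite (@big_morph _ _ (Em mu) 0 +%R 0 +%R (fun p q => @EmD _ mu p q cs)).
  by apply: eq_bigr => i _; rewrite EmZ.
by rewrite -(scale0r (0 : {poly R})) EmZ // mul0r.
Qed.

Definition Lm {R : realType} (mu : probability R R) (p : {poly R}) : {poly R} :=
  \sum_(i < size p) p`_i *: \sum_(j < i) Em mu 'X^j *: 'X^(i.-1 - j).

Lemma Dp_y (R : realType) (p : {poly R}) x y :
  Dp p x y = (\sum_(i < size p) p`_i *: \sum_(j < i) x ^+ (i.-1 - j) *: 'X^j).[y].
Proof.
rewrite /Dp horner_sum; apply: eq_bigr => i _.
rewrite hornerZ horner_sum; congr (_ * _); apply: eq_bigr => j _.
by rewrite hornerZ hornerXn.
Qed.

Lemma Dp_x (R : realType) (p : {poly R}) x y :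
  Dp p x y = (\sum_(i < size p) p`_i *: \sum_(j < i) y ^+ j *: 'X^(i.-1 - j)).[x].
Proof.
rewrite /Dp horner_sum; apply: eq_bigr => i _.
rewrite hornerZ horner_sum; congr (_ * _); apply: eq_bigr => j _.
by rewrite hornerZ hornerXn mulrC.
Qed.

Lemma LopE (R : realType) (mu : probability R R) (p : {poly R}) :
  compactly_supported mu -> Lop mu (horner p) = horner (Lm mu p).
Proof.
move=> cs; apply/funext => x; rewrite /Lop.
under eq_Rintegral do rewrite dqE Dp_y.
rewrite -/(Em mu _) Em_sumZ // /Lm horner_sum; apply: eq_bigr => i _.
rewrite Em_sumZ // hornerZ horner_sum; congr (_ * _); apply: eq_bigr => j _.
by rewrite hornerZ hornerXn mulrC.
Qed.

Lemma distr_g (R : realType) (F g : {poly R}) (b : nat -> nat -> R) :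
  (\sum_(i < size F) F`_i *: \sum_(j < i) b i j *: 'X^(i.-1 - j)) * g =
  \sum_(i < size F) F`_i *: \sum_(j < i) b i j *: ('X^(i.-1 - j) * g).
Proof.
rewrite mulr_suml; apply: eq_bigr => i _; rewrite -scalerAl mulr_suml.
by congr (_ *: _); apply: eq_bigr => j _; rewrite -scalerAl.
Qed.

Lemma fub (R : realType) (mu nu : probability R R) (F g : {poly R}) :
  compactly_supported mu -> compactly_supported nu ->
  Rintegral nu setT (fun y => Rintegral mu setT (fun x => dq (horner F) x y * g.[x]))
  = Em mu (Lm nu F * g).
Proof.
move=> csm csn.
have inner y : Rintegral mu setT (fun x => dq (horner F) x y * g.[x]) =
  (\sum_(i < size F) F`_i *: \sum_(j < i) Em mu ('X^(i.-1 - j) * g) *: 'X^j).[y].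
  under eq_Rintegral do rewrite dqE Dp_x -hornerM.
  rewrite -/(Em mu _) (@distr_g _ F g (fun i j => y ^+ j)) Em_sumZ // horner_sum.
  apply: eq_bigr => i _.
  rewrite Em_sumZ // hornerZ horner_sum; congr (_ * _); apply: eq_bigr => j _.
  by rewrite hornerZ hornerXn mulrC.
under eq_Rintegral do rewrite inner.
rewrite -/(Em nu _) Em_sumZ // /Lm (@distr_g _ F g (fun i j => Em nu 'X^j)) Em_sumZ //.
apply: eq_bigr => i _; rewrite !Em_sumZ //; congr (_ * _); apply: eq_bigr => j _.
by rewrite mulrC.
Qed.

Lemma int_of_poly {R : realType} {mu : probability R R} (f : R -> R) (q : {poly R}) :
  compactly_supported mu -> (forall x, f x = q.[x]) -> mu.-integrable setT (EFin \o f).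
Proof.
move=> cs fq; have -> : f = horner q by apply/funext.
exact: poly_int.
Qed.

Lemma inner_poly {R : realType} {mu : probability R R} (F g : {poly R}) :
  compactly_supported mu -> exists Q : {poly R}, forall y,
  Rintegral mu setT (fun x => dq (horner F) x y * g.[x]) = Q.[y].
Proof.
move=> csm.
exists (\sum_(i < size F) F`_i *: \sum_(j < i) Em mu ('X^(i.-1 - j) * g) *: 'X^j) => y.
under eq_Rintegral do rewrite dqE Dp_x -hornerM.
rewrite -/(Em mu _) (@distr_g _ F g (fun i j => y ^+ j)) Em_sumZ // horner_sum.
apply: eq_bigr => i _.
rewrite Em_sumZ // hornerZ horner_sum; congr (_ * _); apply: eq_bigr => j _.
by rewrite hornerZ hornerXn mulrC.
Qed.

Lemma dq_poly_x {R : realType} (p : {poly R}) y : exists Q : {poly R},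
  forall x, dq (horner p) x y = Q.[x].
Proof. by eexists => x; rewrite dqE Dp_x. Qed.

Lemma key (R : realType) (mu nu : probability R R) (H : R -> R) :
  compactly_supported mu -> compactly_supported nu ->
  L2fun mu H ->
  (forall f : {poly R},
     Rintegral nu setT (fun y => Rintegral mu setT (fun x => dq (horner f) x y))
     = Rintegral mu setT (fun x => H x * f.[x])) ->
  forall f g : {poly R},
    Rintegral mu setT
      (fun x => (Lop nu (Lop mu (horner f)) x - H x * Lop mu (horner f) x) * g.[x])
    = - Rintegral nu setT (fun x => Lop mu (horner f) x * Lop mu (horner g) x).
Proof.
move=> csm csn HL hyp f g.
rewrite !LopE //.
set Fp := Lm mu f; set Gp := Lm mu g.
have e1 : (fun x => ((Lm nu Fp).[x] - H x * Fp.[x]) * g.[x]) =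
          (fun x => (Lm nu Fp * g).[x] - H x * (Fp * g).[x]).
  by apply/funext => x; rewrite !hornerM mulrBl mulrA.
rewrite e1 RintegralB //; last exact: H_int.
  2: exact: poly_int.
have h := hyp (Fp * g).
have inner y : Rintegral mu setT (fun x => dq (horner (Fp * g)) x y) =
   Rintegral mu setT (fun x => dq (horner Fp) x y * g.[x]) + Fp.[y] * Gp.[y].
  under eq_Rintegral do rewrite dqM.
  have [Q1 hQ1] := dq_poly_x Fp y.
  have [Q2 hQ2] := dq_poly_x g y.
  rewrite RintegralD //.
  - rewrite RintegralZl //; last first.
      exact: (@int_of_poly _ _ (fun x => dq (horner g) x y) Q2 csm hQ2).
    congr (_ + _); congr (_ * _); rewrite /Gp -LopE // /Lop.
    by apply: eq_Rintegral => x _; rewrite dq_sym.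
  - exact: (@int_of_poly _ _ (fun x => dq (horner Fp) x y * g.[x]) (Q1 * g) csm
             (fun x => ltac:(by rewrite hornerM hQ1))).
  - exact: (@int_of_poly _ _ (fun x => Fp.[y] * dq (horner g) x y) (Fp.[y] *: Q2) csm
             (fun x => ltac:(by rewrite hornerZ hQ2))).
have h2 : Rintegral nu setT (fun y => Rintegral mu setT (fun x => dq (horner (Fp * g)) x y))
  = Rintegral nu setT (fun y => Rintegral mu setT (fun x => dq (horner Fp) x y * g.[x])
      + Fp.[y] * Gp.[y]).
  by apply: eq_Rintegral => y _; exact: inner.
rewrite h2 {h2} in h.
have [Q hQ] := inner_poly Fp g csm.
rewrite RintegralD // in h; last first.
  - exact: (@int_of_poly _ _ (fun x => Fp.[x] * Gp.[x]) (Fp * Gp) csn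
             (fun x => ltac:(by rewrite hornerM))).
  - exact: (@int_of_poly _ _ _ Q csn hQ).
rewrite fub // in h.
rewrite -h /Em.
have -> : (fun x => (Lm nu Fp * g).[x]) = horner (Lm nu Fp * g) by [].
lra.
Qed.

Theorem lemma4p1 (R : realType) (mu nu : probability R R) (H : R -> R) :
  compactly_supported mu -> compactly_supported nu ->
  L2fun mu H ->
  (forall f : {poly R},
     Rintegral nu setT (fun y => Rintegral mu setT (fun x => dq (horner f) x y))
     = Rintegral mu setT (fun x => H x * f.[x])) ->
  forall f g : {poly R},
    Rintegral mu setT
      (fun x => (Lop nu (Lop mu (horner f)) x - H x * Lop mu (horner f) x) * g.[x])
    = - Rintegral nu setT (fun x => Lop mu (horner f) x * Lop mu (horner g) x)
  /\
    Rintegral mu setT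
      (fun x => (Lop nu (Lop mu (horner f)) x - H x * Lop mu (horner f) x) * g.[x])
    = Rintegral mu setT
      (fun x => f.[x] * (Lop nu (Lop mu (horner g)) x - H x * Lop mu (horner g) x)).
Proof.
move=> csm csn HL hyp f g.
have k1 := @key _ _ _ _ csm csn HL hyp f g.
have k2 := @key _ _ _ _ csm csn HL hyp g f.
split => //.
rewrite k1 (eq_Rintegral _ (fun x _ => mulrC f.[x] _)) k2.
by congr (- _); apply: eq_Rintegral => x _; rewrite mulrC.
Qed.
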